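(* Let $a\in\mathbb{C}_p$, $a\neq0$, $A=|a|_p$, and $f(x)=\frac{ax}{x^2+a}$, whose unique fixed point is $x_0=0$ (with $f'(0)=1$). Then: 1.1) The maximal Siegel disk of $f$ centered at $0$ is $SI(0)=U_{\sqrt A}(0)$. 1.2) $\mathcal P\subset S_{\sqrt A}(0)$. 2) If $r>\sqrt A$ and $x\in S_r(0)$, then $f^n(x)\in S_{A/r}(0)$ for all $n\ge1$. 3) Let $x\in S_{\sqrt A}(0)\setminus\mathcal P$ and $A^*(x)=|f(x)|_p$. 3.1) If $A^*(x)=\sqrt A$ then $f(x)\in S_{\sqrt A}(0)$. 3.2) If $A^*(x)>\sqrt A$ then $f^n(x)\in S_{A/A^*(x)}(0)$ for all $n\ge 2$.
   Context: For $c\in\mathbb{C}_p$, $r>0$: $U_r(c)=\{x:|x-c|_p<r\}$, $V_r(c)=\{x:|x-c|_p\le r\}$, $S_r(c)=\{x:|x-c|_p=r\}$. $f$ is defined on $\mathbb{C}_p\setminus\{\pm\sqrt{-a}\}$ and $\mathcal P=\{x\in\mathbb{C}_p:\ \exists n\in\mathbb{N}\cup\{0\},\ f^n(x)\in\{\sqrt{-a},-\sqrt{-a}\}\}$. A sphere $S_\rho(x_0)$ is invariant if $x\in S_\rho(x_0)$ implies $f^n(x)\in S_\rho(x_0)$ for all $n\ge1$. A ball $U_r(x_0)$ is a Siegel disk if every sphere $S_\rho(x_0)$ with $\rho<r$ is invariant; the maximal Siegel disk $SI(x_0)$ is the union of all Siegel disks centered at $x_0$. *)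

(* Defs.v *)
From HB Require Import structures.
From mathcomp Require Import all_boot all_order all_algebra.
Set Implicit Arguments. Unset Strict Implicit. Unset Printing Implicit Defensive.
Import Order.TTheory GRing.Theory Num.Theory.
Local Open Scope ring_scope.

Definition nonarch_abs (K : fieldType) (R : realFieldType) (v : K -> R) : Prop :=
  [/\ forall x, 0 <= v x,
      forall x, v x = 0 <-> x = 0,
      forall x y, v (x * y) = v x * v y
    & forall x y, v (x + y) <= Num.max (v x) (v y)].

Definition cauchy_seq (K : fieldType) (R : realFieldType) (v : K -> R)
  (u : nat -> K) : Prop :=
  forall eps : R, 0 < eps -> exists N : nat, forall m n : nat,
    (N <= m)%N -> (N <= n)%N -> v (u m - u n) < eps.

Definition converges_to (K : fieldType) (R : realFieldType) (v : K -> R)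
  (u : nat -> K) (l : K) : Prop :=
  forall eps : R, 0 < eps -> exists N : nat, forall n : nat,
    (N <= n)%N -> v (u n - l) < eps.

Definition complete_abs (K : fieldType) (R : realFieldType) (v : K -> R) : Prop :=
  forall u, cauchy_seq v u -> exists l, converges_to v u l.

(* the function f(x) = a x / (x^2 + a); total, with the MathComp convention
   y / 0 = 0 at the two poles x = ±sqrt(-a) *)
Definition fa (K : fieldType) (a : K) (x : K) : K := a * x / (x ^+ 2 + a).

Definition sphere (K : fieldType) (R : realFieldType) (v : K -> R) (c : K) (rho : R) :=
  fun x : K => v (x - c) = rho.
Definition open_ball (K : fieldType) (R : realFieldType) (v : K -> R) (c : K) (r : R) :=
  fun x : K => v (x - c) < r.

Definition invariant_sphere (K : fieldType) (R : realFieldType) (v : K -> R)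
  (f : K -> K) (c : K) (rho : R) : Prop :=
  forall x, sphere v c rho x -> forall n : nat, (1 <= n)%N -> sphere v c rho (iter n f x).

Definition siegel_disk (K : fieldType) (R : realFieldType) (v : K -> R)
  (f : K -> K) (c : K) (r : R) : Prop :=
  0 < r /\ forall rho : R, 0 < rho -> rho < r -> invariant_sphere v f c rho.

Definition max_siegel (K : fieldType) (R : realFieldType) (v : K -> R)
  (f : K -> K) (c : K) : K -> Prop :=
  fun x => exists r : R, siegel_disk v f c r /\ open_ball v c r x.

(* the set P: points some iterate of which is one of ±sqrt(-a), i.e. a root of y^2 = -a *)
Definition preimg_poles (K : fieldType) (a : K) : K -> Prop :=
  fun x => exists n : nat, (iter n (fa a) x) ^+ 2 = - a.

(* Main.v *)
Require Import Defs.
From HB Require Import structures.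
From mathcomp Require Import all_boot all_order all_algebra.
From mathcomp Require Import lra.
Import Order.TTheory GRing.Theory Num.Theory.
Local Open Scope ring_scope.

Section Val.
Context {K : fieldType} {R : realFieldType} {v : K -> R}.
Hypothesis hv : nonarch_abs v.

Lemma v_ge0 x : 0 <= v x. Proof. by case: hv. Qed.
Lemma v0 : v 0 = 0. Proof. by case: hv => _ h _ _; exact: (proj2 (h 0) erefl). Qed.
Lemma v_eq0 x : v x = 0 -> x = 0. Proof. by case: hv => _ h _ _; exact: (proj1 (h x)). Qed.
Lemma vM x y : v (x * y) = v x * v y. Proof. by case: hv. Qed.
Lemma vD x y : v (x + y) <= Num.max (v x) (v y). Proof. by case: hv. Qed.

Lemma v1 : v 1 = 1.
Proof.
have h : v 1 * 1 = v 1 * v 1 by rewrite -vM !mulr1.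
have nz : v 1 != 0 by apply/eqP => /v_eq0 /eqP; rewrite oner_eq0.
by rewrite (mulfI nz h).
Qed.


Lemma vN x : v (- x) = v x.
Proof.
have h : v (-1) * v (-1) = 1 by rewrite -vM mulrNN mulr1 v1.
have h0 := v_ge0 (-1).
have e : v (-1) = 1 by nra.
by rewrite -mulN1r vM e mul1r.
Qed.

Lemma vV x : v (x^-1) = (v x)^-1.
Proof.
have [->|nz] := eqVneq x 0; first by rewrite invr0 v0 invr0.
have vnz : v x != 0 by apply/eqP => /v_eq0 /eqP; rewrite (negbTE nz).
have h : v x * v x^-1 = 1 by rewrite -vM mulfV // v1.
by rewrite -[v x^-1](mulKf vnz) h mulr1.
Qed.

Lemma vdiv x y : v (x / y) = v x / v y.
Proof. by rewrite vM vV. Qed.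

Lemma vX2 x : v (x ^+ 2) = v x ^+ 2.
Proof. by rewrite !expr2 vM. Qed.

Lemma vD_lt x y : v y < v x -> v (x + y) = v x.
Proof.
move=> lt.
have h1 := vD x y.
rewrite (max_idPl (ltW lt)) in h1.
have h2 := vD (x + y) (- y).
rewrite addrK vN in h2.
apply/eqP; rewrite eq_le h1 /=.
case: (lerP (v x) (v (x + y))) => // hlt.
move: h2; rewrite le_max => /orP[h|h].
  by move: h; rewrite leNgt hlt.
by move: h; rewrite leNgt lt.
Qed.

Context {a : K}.
Hypothesis hA : 0 < v a.

Lemma vf y : v (fa a y) = v a * v y / v (y ^+ 2 + a).
Proof. by rewrite /fa vdiv vM. Qed.

Lemma vsq_small y : v y ^+ 2 < v a -> v (y ^+ 2 + a) = v a.
Proof. by move=> h; rewrite addrC vD_lt // vX2. Qed.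

Lemma vsq_big y : v a < v y ^+ 2 -> v (y ^+ 2 + a) = v y ^+ 2.
Proof. by move=> h; rewrite vD_lt // vX2. Qed.

Lemma f_small y : v y ^+ 2 < v a -> v (fa a y) = v y.
Proof.
move=> h; rewrite vf vsq_small // [v a * _]mulrC mulfK //.
by rewrite gt_eqF.
Qed.

Lemma f_big y : v a < v y ^+ 2 -> v (fa a y) = v a / v y.
Proof.
move=> h; rewrite vf vsq_big //.
have ty : 0 < v y.
  rewrite lt_def v_ge0 andbT; apply/eqP => e; move: h; rewrite e expr2 mulr0.
  by rewrite ltNge (ltW hA).
rewrite expr2 invfM mulrA mulfK //; by rewrite gt_eqF.
Qed.

Lemma sq_lt t : v a < t ^+ 2 -> 0 < t -> (v a / t) ^+ 2 < v a.
Proof.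
move=> h tp.
have u_lt : v a / t < t by rewrite ltr_pdivrMr // -expr2.
have up : 0 < v a / t by rewrite divr_gt0.
have : (v a / t) * (v a / t) < (v a / t) * t by rewrite ltr_pM2l.
by rewrite -expr2 divfK // gt_eqF.
Qed.

Lemma iter_small y n : v y ^+ 2 < v a -> v (iter n (fa a) y) = v y.
Proof.
move=> h; elim: n => //= n IH.
by rewrite f_small IH.
Qed.

Lemma pos_of_big t : v a < t ^+ 2 -> 0 <= t -> 0 < t.
Proof.
move=> h t0; rewrite lt_def t0 andbT; apply/eqP => e; move: h.
by rewrite e expr2 mulr0 ltNge (ltW hA).
Qed.

Lemma iter_big y n : v a < v y ^+ 2 -> v (iter n.+1 (fa a) y) = v a / v y.
Proof.
move=> h; rewrite iterSr iter_small f_big //.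
by apply: sq_lt => //; apply: pos_of_big => //; apply: v_ge0.
Qed.

End Val.

Theorem theorem2p4 (p : nat) (K : closedFieldType) (R : rcfType) (v : K -> R)
  (p_prime : prime p) (char0 : [pchar K] =i pred0)
  (v_abs : nonarch_abs v) (v_complete : complete_abs v)
  (v_p : v (p%:R) = (p%:R)^-1)
  (a : K) (a_neq0 : a != 0) :
  let A := v a in
  let f := fa a in
  (* 1.1 *)
  (forall x, max_siegel v f 0 x <-> open_ball v 0 (Num.sqrt A) x) /\
  (* 1.2 *)
  (forall x, preimg_poles a x -> sphere v 0 (Num.sqrt A) x) /\
  (* 2 *)
  (forall (r : R) (x : K), Num.sqrt A < r -> sphere v 0 r x ->
     forall n : nat, (1 <= n)%N -> sphere v 0 (A / r) (iter n f x)) /\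
  (* 3 *)
  (forall x : K, sphere v 0 (Num.sqrt A) x -> ~ preimg_poles a x ->
     let Astar := v (f x) in
     (Astar = Num.sqrt A -> sphere v 0 (Num.sqrt A) (f x)) /\
     (Num.sqrt A < Astar ->
        forall n : nat, (2 <= n)%N -> sphere v 0 (A / Astar) (iter n f x))).
Proof.
move=> A f.
have hA : 0 < A.
  rewrite lt_def (v_ge0 v_abs) andbT; apply/eqP => /(v_eq0 v_abs) e.
  by rewrite e eqxx in a_neq0.
set s := Num.sqrt A.
have s0 : 0 < s by rewrite sqrtr_gt0.
have ss : s ^+ 2 = A by rewrite sqr_sqrtr // ltW.
have lt_s : forall t, 0 <= t -> t < s -> t ^+ 2 < A.
  by move=> t t0 ts; rewrite -ss; nra.
have s_lt : forall t, 0 <= t -> s < t -> A < t ^+ 2.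
  by move=> t t0 ts; rewrite -ss; nra.
have vge := v_ge0 v_abs.
rewrite /sphere /open_ball /max_siegel /preimg_poles.
split; [|split; [|split]].
- move=> x; split.
  + move=> [r [[r0 inv] xr]]; rewrite /open_ball /= subr0 in xr *.
    case: (ltgtP (v x) s) => // hx.
    *
      have := inv (v x) (lt_le_trans s0 (ltW hx)) xr x (ltac:(by rewrite /sphere subr0)) 1%N isT.
      rewrite /sphere /= subr0 /f (f_big v_abs) //; last exact: s_lt.
      move=> e; have := s_lt _ (vge x) hx.
      have vx0 : v x != 0 by rewrite gt_eqF // (lt_trans s0 hx).
      move: e => /(congr1 (fun z => z * v x)); rewrite divfK // => eA.
      by rewrite /A eA expr2 ltxx.
    *
      have [y hy] := @solve_monicpoly K 2 (fun i : nat => if i == 0%N then - a else 0) isT.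
      rewrite big_ord_recl big_ord1 /= expr0 mulr1 mul0r addr0 in hy.
      have vy : v y = s.
        have : v y ^+ 2 = A by rewrite -(vX2 v_abs) hy (vN v_abs).
        move=> h; rewrite /s -h sqrtr_sqr ger0_norm //.
      have := inv s s0 (ltac:(by rewrite -hx)) y (ltac:(by rewrite /sphere subr0)) 1%N isT.
      rewrite /sphere /= subr0 /f /fa hy addNr invr0 mulr0 (v0 v_abs) => e.
      by move: s0; rewrite -e ltxx.
  + move=> hx; exists s; split; last by [].
    split => // rho rho0 rhos y hy n _.
    rewrite /sphere subr0 in hy *; rewrite /sphere subr0 /f (iter_small v_abs) //.
    by rewrite hy; apply: lt_s => //; apply: ltW.
- move=> x [n hn]; rewrite subr0.
  have vn : v (iter n f x) ^+ 2 = A by rewrite -(vX2 v_abs) hn (vN v_abs).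
  case: (ltgtP (v x) s) => // hx.
  + have hs := lt_s _ (vge x) hx.
    move: vn; rewrite /f (iter_small v_abs) // => e.
    by move: hs; rewrite e ltxx.
  + have big := s_lt _ (vge x) hx.
    case: n hn vn => [|m] hn vn.
      by move: big; rewrite -vn ltxx.
    move: vn; rewrite /f (iter_big v_abs) // => e.
    have := sq_lt hA _ big (lt_trans s0 hx).
    by rewrite e ltxx.
- move=> r x hr hx [//|n] _.
  rewrite /sphere subr0 in hx *.
  subst r.
  rewrite /f subr0 (iter_big v_abs) //.
  exact: (s_lt _ (vge _) hr).
- move=> x hx np; split.
  + by move=> e; rewrite /sphere subr0.
  + move=> hs [//|[//|n]] _.
    rewrite /sphere subr0 iterSr /f (iter_big v_abs) //.
    exact: (s_lt _ (vge _) hs).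
Qed.
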